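(* For every $n\ge 3$, the polynomial \[ Q_n(x) = x^{n} - 2(n-1)\sum_{j=1}^{n-1} x^{j} + 1 \] has a unique real root $\lambda_n$ larger than one. Moreover, for $n\ge 4$, \[ 2n-1 - \frac{1}{(2n-1)^{n-2}} < \lambda_n < 2n-1. \] *)

(* Defs.v *)
From mathcomp Require Import all_boot all_order all_algebra.
From mathcomp Require Import reals.
Set Implicit Arguments. Unset Strict Implicit. Unset Printing Implicit Defensive.
Import Order.TTheory GRing.Theory Num.Theory.
Local Open Scope ring_scope.

Definition Qpoly (R : nzRingType) (n : nat) : {poly R} :=
  'X^n - ((2 * (n - 1)%N)%:R : R) *: (\sum_(1 <= j < n) 'X^j) + 1.

(* Main.v *)
Require Import Defs.
From mathcomp Require Import all_boot all_order all_algebra.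
From mathcomp Require Import reals.
From mathcomp Require Import ring lra zify.
Import Order.TTheory GRing.Theory Num.Theory.
Local Open Scope ring_scope.

Section S.
Variable R : realType.

Lemma hornerQ n (x : R) : (Qpoly R n).[x] =
  x ^+ n - (2 * (n - 1))%:R * (\sum_(1 <= j < n) x ^+ j) + 1.
Proof.
rewrite /Qpoly !hornerE horner_sum; congr (_ - _ * _ + _).
by apply: eq_bigr => j _; rewrite hornerXn.
Qed.

Lemma geomS n (x : R) : (1 <= n)%N ->
  (x - 1) * (\sum_(1 <= j < n) x ^+ j) = x ^+ n - x.
Proof.
elim: n => // n IH; case: n IH => [|n] IH _.
  by rewrite big_geq // mulr0 expr1 subrr.
rewrite big_nat_recr //= mulrDr IH // [in RHS]exprS; ring.
Qed.

Lemma termwise p j (x y : R) : 0 < x -> x <= y -> (j <= p.+2)%N ->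
  x ^+ p.+2 * y ^+ j <= y ^+ p.+2 * x ^+ j.
Proof.
move=> x0 xy jp.
rewrite -(subnKC jp) !exprD.
have h1 : x ^+ (p.+2 - j) <= y ^+ (p.+2 - j).
  by apply: lerXn2r => //; rewrite nnegrE ltW // (lt_le_trans x0 xy).
have hx : 0 <= x ^+ j by rewrite exprn_ge0 // ltW.
have hy : 0 <= y ^+ j by rewrite exprn_ge0 // ltW // (lt_le_trans x0 xy).
rewrite -subr_ge0.
set a := x ^+ j; set b := x ^+ _; set c := y ^+ j; set d := y ^+ _.
have -> : c * d * a - a * b * c = (a * c) * (d - b) by ring.
by rewrite mulr_ge0 ?mulr_ge0 // subr_ge0.
Qed.

Lemma key p (x y : R) : 1 < x -> x < y ->
  (Qpoly R p.+3).[x] * y ^+ p.+2 < (Qpoly R p.+3).[y] * x ^+ p.+2.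
Proof.
move=> x1 xy.
have x0 : 0 < x by apply: lt_trans x1.
have y1 : 1 < y by apply: lt_trans xy.
have y0 : 0 < y by apply: lt_trans y1.
rewrite !hornerQ; set c : R := (2 * (p.+3 - 1))%:R.
have c1 : 1 <= c by rewrite /c ler1n muln_gt0.
rewrite (big_ltn (m:=1)) // (big_ltn (m:=1)) //.
set Tx := \sum_(2 <= j < p.+3) x ^+ j; set Ty := \sum_(2 <= j < p.+3) y ^+ j.
have hT : x ^+ p.+2 * Ty <= y ^+ p.+2 * Tx.
  rewrite /Tx /Ty !mulr_sumr; apply: ler_sum_nat => j /andP[_ jl].
  by apply: termwise => //; apply: ltW.
have ab : x ^+ p.+1 <= y ^+ p.+1.
  by apply: lerXn2r; rewrite ?nnegrE ?ltW.
have a0 : 0 < x ^+ p.+1 by rewrite exprn_gt0.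
have b1 : 1 <= y ^+ p.+1 by rewrite exprn_ege1 // ltW.
move: hT; rewrite !(exprS _ p.+2) !(exprS _ p.+1).
set a := x ^+ p.+1; set b := y ^+ p.+1 => hT.
rewrite -subr_gt0.
have -> : (y * (y * b) - c * (y ^+ 1 + Ty) + 1) * (x * a) -
  (x * (x * a) - c * (x ^+ 1 + Tx) + 1) * (y * b) =
  a * (x * y * b - 1) * (y - x) + (c * x - 1) * y * (b - a)
  + c * (y * b * Tx - x * a * Ty) by rewrite !expr1; ring.
have h1 : 0 < a * (x * y * b - 1) * (y - x).
  rewrite !mulr_gt0 // ?subr_gt0 //.
  have : 1 < x * y by apply: (lt_trans x1); rewrite -{1}[x]mulr1 ltr_pM2l.
  move=> h; apply: (lt_le_trans h); rewrite -{1}[x * y]mulr1 ler_wpM2l //.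
  by rewrite mulr_ge0 // ltW.
have h2 : 0 <= (c * x - 1) * y * (b - a).
  rewrite !mulr_ge0 ?subr_ge0 // ?ltW //.
  apply: (le_lt_trans c1); rewrite -{1}[c]mulr1 ltr_pM2l // (lt_le_trans ltr01 c1).
have h3 : 0 <= c * (y * b * Tx - x * a * Ty).
  by rewrite mulr_ge0 ?subr_ge0 // (le_trans ler01 c1).
by rewrite -addrA ltr_pwDl // addr_ge0.
Qed.

Lemma mono p (x y : R) : 1 < x -> x < y -> 0 <= (Qpoly R p.+3).[x] ->
  0 < (Qpoly R p.+3).[y].
Proof.
move=> x1 xy h.
have x0 : 0 < x by apply: lt_trans x1.
have y0 : 0 < y by apply: lt_trans (lt_trans x1 xy).
have k := @key p x y x1 xy.
have h2 : 0 < (Qpoly R p.+3).[y] * x ^+ p.+2.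
  apply: (le_lt_trans _ k); by rewrite mulr_ge0 // exprn_ge0 // ltW.
by move: h2; rewrite pmulr_lgt0 // exprn_gt0.
Qed.

Lemma PQ p (x : R) : (x - 1) * (Qpoly R p.+3).[x] =
  x ^+ p.+3 * (x - ((2 * (p.+3 - 1))%:R + 1)) + ((2 * (p.+3 - 1))%:R + 1) * x - 1.
Proof.
rewrite hornerQ; set c : R := (2 * _)%:R; set S := \sum_(_ <= _ < _) _.
have hS : (x - 1) * S = x ^+ p.+3 - x by rewrite geomS.
transitivity ((x - 1) * x ^+ p.+3 - c * ((x - 1) * S) + (x - 1)); first by ring.
rewrite hS; ring.
Qed.

Lemma bern k (a e : R) : 0 <= e -> e <= a ->
  a ^+ k.+1 - k.+1%:R * e * a ^+ k <= (a - e) ^+ k.+1.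
Proof.
move=> e0 ea; elim: k => [|k IH]; first by rewrite !expr1 expr0 mulr1 mul1r.
have ae : 0 <= a - e by rewrite subr_ge0.
rewrite [(a - e) ^+ k.+2]exprS.
apply: le_trans (ler_wpM2l ae IH).
rewrite -subr_ge0.
have -> : (a - e) * (a ^+ k.+1 - k.+1%:R * e * a ^+ k) -
  (a ^+ k.+2 - k.+2%:R * e * a ^+ k.+1) = k.+1%:R * (e * e) * a ^+ k.
  by rewrite !exprS -(addn1 k.+1) natrD; ring.
have a0 : 0 <= a by apply: le_trans ea.
by rewrite !mulr_ge0 // exprn_ge0.
Qed.

Lemma QL q :
  (Qpoly R q.+4).[(2 * q.+4 - 1)%:R - ((2 * q.+4 - 1)%:R ^+ q.+2)^-1] < 0.
Proof.
set m : R := (2 * q.+4 - 1)%:R.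
have cm : (2 * (q.+4 - 1))%:R + 1 = m :> R.
  by rewrite /m -[1 in LHS]/(1%:R) -natrD; congr (_%:R); lia.
have m7 : 7 <= m by rewrite /m ler_nat; lia.
set M := m ^+ q.+2; set e := M^-1.
have m0 : 0 < m by apply: lt_le_trans m7.
have Mm : m * m <= M.
  rewrite /M !exprS mulrA -{1}[m * m]mulr1; apply: ler_wpM2l.
    by rewrite mulr_ge0 // ltW.
  by rewrite exprn_ege1 // (le_trans _ m7) // ler1n.
have M0 : 0 < M by apply: lt_le_trans Mm; rewrite mulr_gt0.
have eM : M * e = 1 by rewrite /e mulfV // gt_eqF.
have e0 : 0 < e by rewrite /e invr_gt0.
have e1 : e <= 1.
  have : e * 1 <= e * M.
    apply: ler_wpM2l; first exact: ltW.
    by apply: le_trans Mm; nra.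
  by rewrite mulr1 mulrC eM.
set L := m - e.
have L1 : 1 < L by rewrite /L; lra.
have em : e <= m by lra.
have hB := @bern q.+3 m e (ltW e0) em.
have hP := PQ q.+1 L; rewrite cm in hP.
have hN : (q.+4%:R - 1) * m < M.
  apply: lt_le_trans Mm; rewrite ltr_pM2r //.
  have : (q.+4%:R : R) < m by rewrite /m ltr_nat; lia.
  lra.
have hB' : m * m - q.+4%:R * e * m <= e * L ^+ q.+4.
  have := ler_wpM2l (ltW e0) hB.
  have -> : e * (m ^+ q.+4 - q.+4%:R * e * m ^+ q.+3) =
     m * m * (M * e) - q.+4%:R * e * m * (M * e) by rewrite /M !exprS; ring.
  by rewrite eM !mulr1.
have hN' : (q.+4%:R - 1) * m * e < 1.
  by rewrite -[X in _ < X]eM ltr_pM2r.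
have : (L - 1) * (Qpoly R q.+4).[L] < 0.
  rewrite hP /L; lra.
by rewrite pmulr_rlt0 // subr_gt0.
Qed.
End S.

Theorem lemma6p4 (R : realType) (n : nat) (hn : (3 <= n)%N) :
  exists lam : R,
    [/\ 1 < lam, root (Qpoly R n) lam,
        (forall mu : R, 1 < mu -> root (Qpoly R n) mu -> mu = lam) &
        ((4 <= n)%N ->
           (2 * n - 1)%:R - ((2 * n - 1)%:R ^+ (n - 2))^-1 < lam /\
           lam < (2 * n - 1)%:R)].
Proof.
case: n hn => [|[|[|p]]] // _.
set m : R := (2 * p.+3 - 1)%:R.
have cm : (2 * (p.+3 - 1))%:R + 1 = m :> R.
  by rewrite /m -[1 in LHS]/(1%:R) -natrD; congr (_%:R); lia.
have m5 : 5 <= m by rewrite /m ler_nat; lia.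
have Q1 : (Qpoly R p.+3).[1] < 0.
  rewrite hornerQ expr1n.
  under eq_bigr do rewrite expr1n.
  rewrite sumr_const_nat -mulr_natr mul1r -natrM.
  have : (8 : R) <= (2 * (p.+3 - 1) * (p.+3 - 1))%:R by rewrite ler_nat; nia.
  lra.
have Qm : 0 < (Qpoly R p.+3).[m].
  have h := @PQ R p m; rewrite cm subrr mulr0 add0r in h.
  have : 0 < (m - 1) * (Qpoly R p.+3).[m] by rewrite h; nra.
  by rewrite pmulr_rgt0 // subr_gt0 (lt_le_trans _ m5) // ltr1n.
have [lam /andP[l1 lm] rl] : exists2 x, 1 <= x <= m & root (Qpoly R p.+3) x.
  apply: poly_ivt; first by lra.
  by rewrite (ltW Q1) (ltW Qm).
have lam1 : 1 < lam.
  rewrite lt_neqAle l1 andbT; apply/eqP => e; rewrite -e in rl.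
  by move: Q1; rewrite (rootP rl) ltxx.
have uniq : forall mu : R, 1 < mu -> root (Qpoly R p.+3) mu -> mu = lam.
  move=> mu mu1 rmu; case: (ltgtP mu lam) => // h.
    have := @mono R p _ _ mu1 h; rewrite (rootP rmu) (rootP rl) lexx ltxx.
    by move=> /(_ isT).
  have := @mono R p _ _ lam1 h; rewrite (rootP rmu) (rootP rl) lexx ltxx.
  by move=> /(_ isT).
exists lam; split => // h4.
have [q pq] : exists q, p = q.+1 by case: p h4 {m cm m5 Q1 Qm lm rl uniq} => [|q] //; exists q.
subst p.
have -> : (q.+4 - 2 = q.+2)%N by [].
have QL' := QL R q.
split.
  case: (ltgtP lam (m - (m ^+ q.+2)^-1)) => // h.
    have := @mono R q.+1 _ _ lam1 h; rewrite (rootP rl) lexx.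
    by move=> /(_ isT); rewrite ltNge (ltW QL').
  by move: QL'; rewrite -h (rootP rl) ltxx.
rewrite lt_neqAle lm andbT; apply/eqP => e.
by move: Qm; rewrite -e (rootP rl) ltxx.
Qed.
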